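(* Consider Algorithm B on an input whose optimal offline makespan is $1$, and suppose job $j$ is handled by Step 5 with $p_j+p^{\max Y}_j\le 1.25$. Let $\gamma_j=y_{j-1}+p_j-1.25$. Then the set $W$ chosen in Step 5 satisfies $\gamma_j\le w_j\le 0.75\,p_j$ and $w_j<0.5$; after $j$ is handled both machine loads are at most $1.25$; and if afterwards $m_1$ receives only jobs of GoS $1$, its load remains at most $1.25$.
   Context: Model (two hierarchical machines with migration). Jobs $1,2,\dots,n$ arrive one by one. Job $j$ has a size $p_j>0$ and a grade of service (GoS) $g_j\in\{1,2\}$; a job of GoS $1$ may only be processed on machine $m_1$, a job of GoS $2$ on $m_1$ or $m_2$. When job $j$ arrives, the algorithm assigns it and may migrate previously arrived jobs of total size at most $M\cdot p_j$. Bin stretching: the optimal offline makespan of the complete input is $1$ and is known in advance. Notation: $Y_{j}$ is the set of jobs on $m_2$ just after job $j$ has been handled (including migrations), $y_j$ its total size, $y_0=0$. $p^{\max Y}_j$ and $p^{\max Y,2}_j$ are the largest and second largest sizes of jobs in $Y_{j-1}$ (each defined as $0$ if it does not exist), and $j^{\max Y}$ is a job of $Y_{j-1}$ of size $p^{\max Y}_j$. ''Sorted $Y_{j-1}$'' means the jobs of $Y_{j-1}$ listed in non-increasing order of size; $w_j$ denotes the total size of the set $W$ chosen when handling $j$. Algorithm B. On arrival of job $j$: Step 2: if $g_j=1$ or $y_{j-1}\ge 0.75$, assign $j$ to $m_1$. Step 3: else if $y_{j-1}+p_j\le 1.25$, assign $j$ to $m_2$. Step 4: else if $p_j\ge 0.75$: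 let $W$ be the longest prefix of sorted $Y_{j-1}$ with total size at most $0.75p_j$ (possibly empty). If $y_{j-1}-w_j+p_j>1.25$, assign $j$ to $m_1$ (no migration); otherwise migrate the jobs of $W$ to $m_1$ and assign $j$ to $m_2$. Step 5: else (so $p_j<0.75$): if $p_j+p^{\max Y}_j>1.25$, assign $j$ to $m_1$. Otherwise choose $W$ as follows: if $p^{\max Y}_j\ge y_{j-1}/2$, let $W=Y_{j-1}\setminus\{j^{\max Y}\}$; if $0.25\le p^{\max Y}_j<y_{j-1}/2$, let $W=\{j^{\max Y}\}$; if $p^{\max Y}_j<0.25$, let $W$ be the shortest prefix of sorted $Y_{j-1}$ with total size at least $0.25$ (or all of $Y_{j-1}$ if none exists), and if then $w_j>0.75p_j$ replace $W$ by $Y_{j-1}\setminus W$. Migrate the jobs of $W$ to $m_1$ and assign $j$ to $m_2$. *)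

(* Defs.v *)
From Stdlib Require Import Reals Lra List Sorted Permutation.
Import ListNotations.
Open Scope R_scope.

(* An input of n jobs is given by sizes p : nat -> R and grades of service
   g : nat -> nat; the jobs are 1, 2, ..., n (arrival order).
   A set of jobs is represented by a list of job indices. *)

Definition sumsz (p : nat -> R) (l : list nat) : R :=
  fold_right (fun i acc => p i + acc) 0 l.

Definition memb (i : nat) (l : list nat) : bool := existsb (Nat.eqb i) l.

Definition pmax (p : nat -> R) (l : list nat) : R :=
  fold_right (fun i acc => Rmax (p i) acc) 0 l.

Definition sorted_of (p : nat -> R) (Y s : list nat) : Prop :=
  Permutation s Y /\ Sorted (fun a b => p b <= p a) s.

Definition valid_input (n : nat) (p : nat -> R) (g : nat -> nat) : Prop :=
  forall i, (1 <= i <= n)%nat -> 0 < p i /\ (g i = 1%nat \/ g i = 2%nat).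

(* Offline schedules: a i = true means job i is on m2. *)
Definition feasible (n : nat) (g : nat -> nat) (a : nat -> bool) : Prop :=
  forall i, (1 <= i <= n)%nat -> g i = 1%nat -> a i = false.

Definition sched_load1 (n : nat) (p : nat -> R) (a : nat -> bool) : R :=
  sumsz p (filter (fun i => negb (a i)) (seq 1 n)).
Definition sched_load2 (n : nat) (p : nat -> R) (a : nat -> bool) : R :=
  sumsz p (filter (fun i => a i) (seq 1 n)).
Definition makespan (n : nat) (p : nat -> R) (a : nat -> bool) : R :=
  Rmax (sched_load1 n p a) (sched_load2 n p a).

Definition opt_is_one (n : nat) (p : nat -> R) (g : nat -> nat) : Prop :=
  (exists a, feasible n g a /\ makespan n p a = 1) /\
  (forall a, feasible n g a -> 1 <= makespan n p a).

(* Step 4: W is the longest prefix of sorted Y with total size at most 0.75 p_j *)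
Definition step4_W (p : nat -> R) (pj : R) (Y W : list nat) : Prop :=
  exists s k, sorted_of p Y s /\ (k <= length s)%nat /\
    W = firstn k s /\ sumsz p (firstn k s) <= 3/4 * pj /\
    (forall k', (k < k' <= length s)%nat -> sumsz p (firstn k' s) > 3/4 * pj).

Definition step5_W (p : nat -> R) (pj : R) (Y W : list nat) : Prop :=
  let y := sumsz p Y in
  let pm := pmax p Y in
  (* case p^maxY >= y/2 : W = Y \ {j^maxY} *)
  (pm >= y / 2 /\
     exists jm, In jm Y /\ p jm = pm /\ Permutation Y (jm :: W)) \/
  (1/4 <= pm < y / 2 /\
     exists jm, In jm Y /\ p jm = pm /\ W = [jm]) \/
  (* case p^maxY < 0.25 : shortest prefix of sorted Y with total >= 0.25
     (or all of Y if none), complemented if its total exceeds 0.75 p_j *)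
  (pm < 1/4 /\
     exists s k, sorted_of p Y s /\ (k <= length s)%nat /\
       ((sumsz p (firstn k s) >= 1/4 /\
           forall k', (k' < k)%nat -> sumsz p (firstn k' s) < 1/4) \/
        ((forall k', (k' <= length s)%nat -> sumsz p (firstn k' s) < 1/4) /\
           k = length s)) /\
       ((sumsz p (firstn k s) <= 3/4 * pj /\ W = firstn k s) \/
        (sumsz p (firstn k s) > 3/4 * pj /\ W = skipn k s))).

Inductive decision : Type :=
  | DStep2                     (* Step 2: j to m1 *)
  | DStep3                     (* Step 3: j to m2 *)
  | DStep4stay                 (* Step 4: j to m1, no migration *)
  | DStep4mig (W : list nat)   (* Step 4: W migrated to m1, j to m2 *)
  | DStep5stay                 (* Step 5: p_j + p^maxY > 1.25, j to m1 *)
  | DStep5mig (W : list nat).  (* Step 5: W migrated to m1, j to m2 *)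

(* One step of Algorithm B on arrival of job j: Y is Y_{j-1}, Y' is Y_j. *)
Inductive stepB (p : nat -> R) (g : nat -> nat) (j : nat) (Y : list nat)
  : list nat -> decision -> Prop :=
  | st2 : (g j = 1%nat \/ sumsz p Y >= 3/4) -> stepB p g j Y Y DStep2
  | st3 : forall Y', g j <> 1%nat -> sumsz p Y < 3/4 ->
      sumsz p Y + p j <= 5/4 ->
      Permutation Y' (j :: Y) -> stepB p g j Y Y' DStep3
  | st4stay : forall W, g j <> 1%nat -> sumsz p Y < 3/4 ->
      sumsz p Y + p j > 5/4 -> p j >= 3/4 -> step4_W p (p j) Y W ->
      sumsz p Y - sumsz p W + p j > 5/4 -> stepB p g j Y Y DStep4stay
  | st4mig : forall W R Y', g j <> 1%nat -> sumsz p Y < 3/4 ->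
      sumsz p Y + p j > 5/4 -> p j >= 3/4 -> step4_W p (p j) Y W ->
      sumsz p Y - sumsz p W + p j <= 5/4 ->
      Permutation Y (W ++ R) -> Permutation Y' (j :: R) ->
      stepB p g j Y Y' (DStep4mig W)
  | st5stay : g j <> 1%nat -> sumsz p Y < 3/4 ->
      sumsz p Y + p j > 5/4 -> p j < 3/4 ->
      p j + pmax p Y > 5/4 -> stepB p g j Y Y DStep5stay
  | st5mig : forall W R Y', g j <> 1%nat -> sumsz p Y < 3/4 ->
      sumsz p Y + p j > 5/4 -> p j < 3/4 ->
      p j + pmax p Y <= 5/4 -> step5_W p (p j) Y W ->
      Permutation Y (W ++ R) -> Permutation Y' (j :: R) ->
      stepB p g j Y Y' (DStep5mig W).

(* A run of Algorithm B on jobs 1..n: Y k is the set of jobs on m2 just after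
   job k has been handled (Y 0 = empty), D k records how job k was handled. *)
Definition runB (n : nat) (p : nat -> R) (g : nat -> nat)
  (Y : nat -> list nat) (D : nat -> decision) : Prop :=
  Y 0%nat = [] /\
  forall k, (1 <= k <= n)%nat -> stepB p g k (Y (k - 1)%nat) (Y k) (D k).

Definition m1_jobs (Y : nat -> list nat) (k : nat) : list nat :=
  filter (fun i => negb (memb i (Y k))) (seq 1 k).

Definition load1 (p : nat -> R) (Y : nat -> list nat) (k : nat) : R :=
  sumsz p (m1_jobs Y k).
Definition load2 (p : nat -> R) (Y : nat -> list nat) (k : nat) : R :=
  sumsz p (Y k).

(* Main.v *)
Require Import Defs.
From Stdlib Require Import Reals List.
From Stdlib Require Import Lra Lia Sorted Permutation.
Import ListNotations.
Open Scope R_scope.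

Lemma sumsz_nil p : sumsz p [] = 0. Proof. reflexivity. Qed.
Lemma sumsz_cons p a l : sumsz p (a::l) = p a + sumsz p l. Proof. reflexivity. Qed.
Lemma sumsz_app p l1 l2 : sumsz p (l1 ++ l2) = sumsz p l1 + sumsz p l2.
Proof. induction l1 as [|a l1 IH]; simpl app; rewrite ?sumsz_nil, ?sumsz_cons; [lra| rewrite IH; lra]. Qed.
Lemma sumsz_perm p l l' : Permutation l l' -> sumsz p l = sumsz p l'.
Proof. induction 1; rewrite ?sumsz_cons; lra. Qed.
Lemma sumsz_filter p (f : nat -> bool) l :
  sumsz p l = sumsz p (filter f l) + sumsz p (filter (fun x => negb (f x)) l).
Proof. induction l as [|a l IH]; cbn [filter]; [rewrite sumsz_nil; lra|].
  destruct (f a); cbn [negb]; rewrite !sumsz_cons; lra. Qed.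
Lemma sumsz_filter_le p f l : (forall i, In i l -> 0 <= p i) -> sumsz p (filter f l) <= sumsz p l.
Proof. induction l as [|a l IH]; intro H; cbn [filter]; [lra|].
 assert (0 <= p a) by (apply H; left; auto).
 assert (sumsz p (filter f l) <= sumsz p l) by (apply IH; intros; apply H; right; auto).
 destruct (f a); rewrite ?sumsz_cons; lra. Qed.
Lemma sumsz_nonneg p l : (forall i, In i l -> 0 <= p i) -> 0 <= sumsz p l.
Proof. induction l as [|a l IH]; intro H; [rewrite sumsz_nil; lra|].
 rewrite sumsz_cons. assert (0 <= p a) by (apply H; left; auto).
 assert (0 <= sumsz p l) by (apply IH; intros; apply H; right; auto). lra. Qed.

Lemma memb_spec i l : memb i l = true <-> In i l.
Proof. unfold memb. rewrite existsb_exists. split.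
 - intros [x [Hx He]]. apply Nat.eqb_eq in He. subst; auto.
 - intros H. exists i. split; auto. apply Nat.eqb_refl.
Qed.
Lemma memb_false i l : memb i l = false <-> ~ In i l.
Proof. rewrite <- memb_spec. destruct (memb i l); split; intros; try congruence; exfalso; auto. Qed.
Lemma in_m1 Y k i : In i (m1_jobs Y k) <-> (1 <= i <= k)%nat /\ ~ In i (Y k).
Proof. unfold m1_jobs. rewrite filter_In, in_seq, Bool.negb_true_iff, memb_false.
  split; intros [A B]; split; auto; lia. Qed.

Definition T p k := sumsz p (seq 1 k).
Lemma load1_eq p Y k : NoDup (Y k) -> (forall i, In i (Y k) -> (1 <= i <= k)%nat) ->
  load1 p Y k = T p k - sumsz p (Y k).
Proof. intros Hnd Hin. unfold load1, m1_jobs, T.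
 rewrite (sumsz_filter p (fun i => memb i (Y k)) (seq 1 k)).
 assert (Hp : Permutation (filter (fun i => memb i (Y k)) (seq 1 k)) (Y k)).
 { apply NoDup_Permutation. apply NoDup_filter, seq_NoDup. exact Hnd.
   intro x. rewrite filter_In, in_seq, memb_spec. split. tauto. intro H. split; auto.
   specialize (Hin x H); lia. }
 rewrite (sumsz_perm p _ _ Hp). lra. Qed.
Lemma T_S p k : T p (S k) = T p k + p (S k).
Proof. unfold T. rewrite seq_S, sumsz_app, sumsz_cons, sumsz_nil. simpl. lra. Qed.
Lemma T_split p j n : (j <= n)%nat -> T p n = T p j + sumsz p (seq (S j) (n - j)).
Proof. intros. unfold T. replace n with (j + (n-j))%nat at 1 by lia.
  rewrite seq_app, sumsz_app. reflexivity. Qed.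

Definition Inv g (Y : nat -> list nat) k := NoDup (Y k) /\
  forall i, In i (Y k) -> (1 <= i <= k)%nat /\ g i <> 1%nat.

Lemma step_cases p g k Y Y' d : stepB p g k Y Y' d -> Y' = Y \/
  exists W R, g k <> 1%nat /\ Permutation Y (W ++ R) /\ Permutation Y' (k :: R).
Proof. destruct 1.
  - left; reflexivity.
  - right; exists [], Y; split; [assumption| split; [apply Permutation_refl | assumption]].
  - left; reflexivity.
  - right; do 2 eexists; eauto.
  - left; reflexivity.
  - right; do 2 eexists; eauto.
Qed.

Lemma inv_all n p g Y D : runB n p g Y D -> forall k, (k <= n)%nat -> Inv g Y k.
Proof. intros [H0 Hst] k. induction k as [|k IH]; intro Hk.
 - unfold Inv; rewrite H0; split; [constructor | intros i []].
 - destruct (IH ltac:(lia)) as [Hnd Hin].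
   assert (Hs := Hst (S k) ltac:(lia)). replace (S k - 1)%nat with k in Hs by lia.
   destruct (step_cases _ _ _ _ _ _ Hs) as [E | [W [R [Hg [HP1 HP2]]]]].
   + unfold Inv; rewrite E; split; auto. intros i Hi; destruct (Hin i Hi); split; auto; lia.
   + assert (HR : forall i, In i R -> In i (Y k)).
     { intros i Hi. eapply Permutation_in; [apply Permutation_sym; exact HP1|]. apply in_or_app; auto. }
     assert (HndR : NoDup R).
     { apply (Permutation_NoDup HP1) in Hnd. apply NoDup_app_remove_l in Hnd; auto. }
     unfold Inv; split.
     * apply (Permutation_NoDup (Permutation_sym HP2)). constructor; auto.
       intro Hk'. destruct (Hin _ (HR _ Hk')); lia.
     * intros i Hi. apply (Permutation_in _ HP2) in Hi. destruct Hi as [<-|Hi].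
       -- split; auto; lia.
       -- destruct (Hin _ (HR _ Hi)); split; auto; lia.
Qed.

Lemma pmax_ge p l i : In i l -> p i <= pmax p l.
Proof. induction l as [|a l IH]; intros H; [destruct H|].
  change (pmax p (a::l)) with (Rmax (p a) (pmax p l)).
  destruct H as [<-|H]. apply Rmax_l. eapply Rle_trans; [apply IH; auto| apply Rmax_r]. Qed.

Lemma firstn_S_sum p s k : (k < length s)%nat ->
  sumsz p (firstn (S k) s) = sumsz p (firstn k s) + p (nth k s 0%nat).
Proof. revert k; induction s as [|a s IH]; intros k Hk; simpl in Hk; [lia|]. destruct k as [|k].
 - cbn [firstn nth]. rewrite sumsz_cons, !sumsz_nil. lra.
 - change (firstn (S (S k)) (a::s)) with (a :: firstn (S k) s).
   change (firstn (S k) (a::s)) with (a :: firstn k s).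
   change (nth (S k) (a::s) 0%nat) with (nth k s 0%nat).
   rewrite !sumsz_cons, IH by lia. lra.
Qed.

Lemma W_bounds p pj Y W :
 sumsz p Y < 3/4 -> sumsz p Y + pj > 5/4 -> pj < 3/4 -> pj + pmax p Y <= 5/4 ->
 step5_W p pj Y W ->
 sumsz p Y + pj - 5/4 <= sumsz p W /\ sumsz p W <= 3/4*pj /\ sumsz p W < 1/2.
Proof. unfold step5_W; cbv zeta; intros H1 H2 H3 H4 H5.
 destruct H5 as [[Hc [jm [Hin [Hp Hperm]]]] | [[Hc [jm [Hin [Hp ->]]]] | [Hc [s [k [[Hs _] [Hk [Hsel Hw]]]]]]]].
 - apply (sumsz_perm p) in Hperm; rewrite sumsz_cons in Hperm. lra.
 - rewrite sumsz_cons, sumsz_nil; lra.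
 - assert (Hys : sumsz p s = sumsz p Y) by (apply sumsz_perm; exact Hs).
   assert (Hsp : sumsz p (firstn k s) + sumsz p (skipn k s) = sumsz p s)
     by (rewrite <- sumsz_app, firstn_skipn; reflexivity).
   destruct Hsel as [[Hge Hlt] | [Hall Hkl]].
   + destruct k as [|k]. { rewrite firstn_O, sumsz_nil in Hge; lra. }
     assert (Hk1 := Hlt k (Nat.lt_succ_diag_r k)).
     rewrite firstn_S_sum in * by lia.
     assert (p (nth k s 0%nat) <= pmax p Y).
     { apply pmax_ge. eapply Permutation_in; [exact Hs|]. apply nth_In; lia. }
     destruct Hw as [[Hle ->] | [Hgt ->]]. 
     * rewrite firstn_S_sum by lia. lra.
     * lra.
   + subst k. specialize (Hall (length s) (le_n _)). rewrite firstn_all in Hall. lra.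
Qed.

Lemma step5mig_inv p g k Y Y' W : stepB p g k Y Y' (DStep5mig W) -> exists R,
  g k <> 1%nat /\ sumsz p Y < 3/4 /\ sumsz p Y + p k > 5/4 /\ p k < 3/4 /\
  p k + pmax p Y <= 5/4 /\ step5_W p (p k) Y W /\ Permutation Y (W ++ R) /\
  Permutation Y' (k :: R).
Proof. intros H; inversion H; subst. eexists; repeat split; eassumption. Qed.
Theorem mainTheorem8 (n : nat) (p : nat -> R) (g : nat -> nat)
  (Y : nat -> list nat) (D : nat -> decision) (j : nat) (W : list nat) :
  valid_input n p g ->
  opt_is_one n p g ->
  runB n p g Y D ->
  (1 <= j <= n)%nat ->
  D j = DStep5mig W ->
  let gamma := sumsz p (Y (j - 1)%nat) + p j - 5/4 in
  (gamma <= sumsz p W /\ sumsz p W <= 3/4 * p j /\ sumsz p W < 1/2) /\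
  (load1 p Y j <= 5/4 /\ load2 p Y j <= 5/4) /\
  ((forall k, (j < k <= n)%nat -> forall i,
       In i (m1_jobs Y k) -> ~ In i (m1_jobs Y (k - 1)%nat) -> g i = 1%nat) ->
   forall k, (j <= k <= n)%nat -> load1 p Y k <= 5/4).
Proof.
  intros Hv Hopt Hrun Hj HD; cbv zeta.
  assert (Hst := proj2 Hrun j Hj). rewrite HD in Hst.
  destruct (step5mig_inv _ _ _ _ _ _ Hst) as [R0 [Hg [Hy1 [Hy2 [Hpj [Hpm [HW [HP1 HP2]]]]]]]].
  assert (Hw := W_bounds _ _ _ _ Hy1 Hy2 Hpj Hpm HW).
  assert (Hyj : sumsz p (Y j) = p j + sumsz p R0)
    by (rewrite (sumsz_perm p _ _ HP2), sumsz_cons; reflexivity).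
  assert (Hy : sumsz p (Y (j-1)%nat) = sumsz p W + sumsz p R0)
    by (rewrite (sumsz_perm p _ _ HP1), sumsz_app; reflexivity).
  assert (Htot : T p n <= 2).
  { destruct (proj1 Hopt) as [a [_ Hm]]. unfold makespan in Hm.
    assert (E : T p n = sched_load2 n p a + sched_load1 n p a)
      by (unfold T, sched_load1, sched_load2; apply sumsz_filter).
    assert (H1 := Rmax_l (sched_load1 n p a) (sched_load2 n p a)).
    assert (H2 := Rmax_r (sched_load1 n p a) (sched_load2 n p a)). lra. }
  assert (Hpos : forall i, (1 <= i <= n)%nat -> 0 < p i) by (intros i Hi; apply (Hv i Hi)).
  assert (HTle : forall a b, (a <= b <= n)%nat -> T p a <= T p b).
  { intros a b Hab. rewrite (T_split p a b) by lia.
    assert (0 <= sumsz p (seq (S a) (b - a))); [|lra].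
    apply sumsz_nonneg. intros i Hi. apply in_seq in Hi. left; apply Hpos; lia. }
  assert (Hinv := inv_all _ _ _ _ _ Hrun).
  assert (HTj : T p j = T p (j-1)%nat + p j).
  { replace j with (S (j-1)) at 1 by lia. rewrite T_S. replace (S (j-1)) with j by lia. reflexivity. }
  assert (HLj : load1 p Y j = T p j - sumsz p (Y j)).
  { destruct (Hinv j ltac:(lia)) as [Hnd Hin]. apply load1_eq; auto. intros i Hi; apply Hin; auto. }
  assert (HTjn := HTle j n ltac:(lia)).
  split; [exact Hw|]. split; [split; [|unfold load2]; lra|].
  intros Hgos.
  set (G := fun k => sumsz p (filter (fun i => Nat.eqb (g i) 1) (seq (S j) (k - j)))).
  assert (Hind : forall d, (j + d <= n)%nat -> load1 p Y (j + d)%nat <= load1 p Y j + G (j + d)%nat).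
  { induction d as [|d IH]; intro Hd.
    - replace (j + 0)%nat with j by lia. unfold G. rewrite Nat.sub_diag. cbn [seq filter].
      rewrite sumsz_nil. lra.
    - set (k := (j + S d)%nat).
      assert (HG : G k = G (j + d)%nat + (if Nat.eqb (g k) 1 then p k else 0)).
      { unfold G. replace (k - j)%nat with (S d) by (unfold k; lia).
        replace (j + d - j)%nat with d by lia.
        rewrite seq_S, filter_app, sumsz_app. replace (S j + d)%nat with k by (unfold k; lia).
        cbn [filter]. destruct (Nat.eqb (g k) 1); rewrite ?sumsz_cons, ?sumsz_nil; lra. }
      assert (IH' := IH ltac:(lia)).
      assert (Hs := proj2 Hrun k ltac:(unfold k; lia)).
      replace (k - 1)%nat with (j + d)%nat in Hs by (unfold k; lia).
      destruct (Hinv (j + d)%nat ltac:(lia)) as [Hnd0 Hin0].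
      destruct (Hinv k ltac:(unfold k; lia)) as [Hnd1 Hin1].
      assert (HL0 : load1 p Y (j+d)%nat = T p (j+d)%nat - sumsz p (Y (j+d)%nat))
        by (apply load1_eq; auto; intros i Hi; apply Hin0; auto).
      assert (HL1 : load1 p Y k = T p k - sumsz p (Y k))
        by (apply load1_eq; auto; intros i Hi; apply Hin1; auto).
      assert (HTk : T p k = T p (j + d)%nat + p k)
        by (unfold k; rewrite Nat.add_succ_r, T_S; reflexivity).
      assert (Hpk : 0 < p k) by (apply Hpos; unfold k; lia).
      assert (Hk1 : (k - 1)%nat = (j + d)%nat) by (unfold k; lia).
      destruct (step_cases _ _ _ _ _ _ Hs) as [E | [W' [R' [Hg' [HP1' HP2']]]]].
      + assert (Hgk : g k = 1%nat).
        { apply (Hgos k ltac:(unfold k; lia)).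
          - apply in_m1. split; [unfold k; lia|]. rewrite E. intro Hk.
            destruct (Hin0 _ Hk); unfold k in *; lia.
          - rewrite in_m1. rewrite Hk1. intros [Hc _]. unfold k in Hc; lia. }
        rewrite HG, HL1, HL0 in *. rewrite E, HTk. rewrite Hgk; cbn. lra.
      + destruct W' as [|i W'].
        * assert (Hy0 : sumsz p (Y (j+d)%nat) = sumsz p R')
            by (rewrite (sumsz_perm p _ _ HP1'); reflexivity).
          assert (Hyk : sumsz p (Y k) = p k + sumsz p R')
            by (rewrite (sumsz_perm p _ _ HP2'), sumsz_cons; reflexivity).
          rewrite HG, HL1, HL0 in *. rewrite Hyk, HTk.
          destruct (Nat.eqb (g k) 1); lra.
        * exfalso.
          assert (Hi : In i (Y (j+d)%nat)).
          { eapply Permutation_in; [apply Permutation_sym; exact HP1'|]. left; auto. }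
          destruct (Hin0 _ Hi) as [Hib Hgi].
          apply Hgi. apply (Hgos k ltac:(unfold k; lia)).
          -- apply in_m1. split; [unfold k in *; lia|]. intro Hik.
             apply (Permutation_in _ HP2') in Hik. destruct Hik as [Hik|Hik]; [unfold k in *; lia|].
             assert (Hnd2 := Permutation_NoDup HP1' Hnd0).
             cbn [app] in Hnd2. inversion Hnd2 as [|? ? Hni _]; subst.
             apply Hni. apply in_or_app; auto.
          -- rewrite in_m1, Hk1. intros [_ Hc]. auto. }
  intros k Hk.
  assert (Hb := Hind (k - j)%nat ltac:(lia)). replace (j + (k - j))%nat with k in Hb by lia.
  assert (HGk : G k <= T p k - T p j).
  { rewrite (T_split p j k) by lia. unfold G. assert (sumsz p (filter (fun i => Nat.eqb (g i) 1) (seq (S j) (k - j))) <= sumsz p (seq (S j) (k - j))); [|lra].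
    apply sumsz_filter_le. intros i Hi. apply in_seq in Hi. left; apply Hpos; lia. }
  assert (HTkn := HTle k n ltac:(lia)).
  lra.
Qed.
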